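(* Let $t\ge 2$ and $w\ge 1$ be integers, $u=\lfloor(\frac{t}{2}+1)^2\rfloor$, and let $(\mathcal{X},\mathcal{B})$ be a $(w,v)$ set system. If $\mathcal{F}=\{\mathcal{F}_1,\dots,\mathcal{F}_m\}$ is a minimal forbidden configuration in $\mathcal{B}$ containing $s$ distinct blocks, where $2\le s\le u$ (i.e. $|U(\mathcal{F})|=s$), then $$\Big|\bigcup_{B\in U(\mathcal{F})}B\Big|=\Big|\bigcup_{1\le i\le m}\bigcup_{B\in\mathcal{F}_i}B\Big|\le\min\{(s-1)w,\ v\}.$$
   Context: A $(w,v)$ set system is a pair $(\mathcal{X},\mathcal{B})$ with $|\mathcal{X}|=v$ and $\mathcal{B}$ a family of $w$-element subsets (blocks) of $\mathcal{X}$. A configuration in $\mathcal{B}$ is a collection $\mathcal{F}=\{\mathcal{F}_1,\dots,\mathcal{F}_m\}$ with $\mathcal{F}_i\subseteq\mathcal{B}$, $|\mathcal{F}_i|\le t$, and $\bigcap_i\mathcal{F}_i=\emptyset$; it is minimal if $\bigcap_{j\ne i}\mathcal{F}_j\neq\emptyset$ for every $i$. $U(\mathcal{F})=\bigcup_i\mathcal{F}_i$. A (minimal) forbidden configuration in $\mathcal{B}$ is a (minimal) configuration with $\big|\bigcap_{i=1}^m\big(\bigcup_{B\in\mathcal{F}_i}B\big)\big|\ge w$. *)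

(* Defs.v *)
From mathcomp Require Import all_boot.
Set Implicit Arguments. Unset Strict Implicit. Unset Printing Implicit Defensive.

(* A (w,v) set system: point set = finType T with #|T| = v, blocks = family
   B : {set {set T}} of w-element subsets.  A configuration with m members is
   F : 'I_m -> {set {set T}}. *)

Definition set_system (T : finType) (w v : nat) (B : {set {set T}}) : Prop :=
  #|T| = v /\ (forall b, b \in B -> #|b| = w).

Definition blocks_union (T : finType) (G : {set {set T}}) : {set T} :=
  \bigcup_(b in G) b.

Definition UF (T : finType) (m : nat) (F : 'I_m -> {set {set T}}) : {set {set T}} :=
  \bigcup_(i < m) F i.

Definition configuration (T : finType) (t : nat) (B : {set {set T}})
    (m : nat) (F : 'I_m -> {set {set T}}) : Prop :=
  (forall i, F i \subset B) /\ (forall i, #|F i| <= t) /\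
  \bigcap_(i < m) F i = set0.

Definition minimal_configuration (T : finType) (t : nat) (B : {set {set T}})
    (m : nat) (F : 'I_m -> {set {set T}}) : Prop :=
  configuration t B F /\ (forall i : 'I_m, \bigcap_(j < m | j != i) F j != set0).

Definition minimal_forbidden_configuration (T : finType) (t w : nat)
    (B : {set {set T}}) (m : nat) (F : 'I_m -> {set {set T}}) : Prop :=
  minimal_configuration t B F /\ w <= #|\bigcap_(i < m) blocks_union (F i)|.

(* Main.v *)
Require Import Defs.
From mathcomp Require Import all_boot.
From mathcomp Require Import zify.

Lemma card_as_sum (T : finType) (b : {set T}) :
  #|b| = \sum_x (x \in b : nat).
Proof. by rewrite -sum1_card big_mkcond /=; apply: eq_bigr => x _; case: (x \in b). Qed.

(* u = floor((t/2 + 1)^2) = floor((t+2)^2 / 4) *)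
Theorem lemma2 (t w v : nat) (T : finType) (B : {set {set T}})
    (m : nat) (F : 'I_m -> {set {set T}}) (s : nat) :
  2 <= t -> 1 <= w ->
  set_system w v B ->
  minimal_forbidden_configuration t w B F ->
  #|UF F| = s -> 2 <= s -> s <= (t + 2) ^ 2 %/ 4 ->
  #|blocks_union (UF F)| = #|\bigcup_(i < m) blocks_union (F i)| /\
  #|blocks_union (UF F)| <= minn ((s - 1) * w) v.
Proof.
move=> _ _ [cardT cardB] [[[subB [_ capF]] _] forb] Us _ _.
have eqU : blocks_union (UF F) = \bigcup_(i < m) blocks_union (F i).
  apply/setP => x; apply/bigcupP/bigcupP.
    move=> [b /bigcupP [i _ bi] xb]; exists i => //; apply/bigcupP; by exists b.
  move=> [i _ /bigcupP [b bi xb]]; exists b => //; apply/bigcupP; by exists i.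
split; first by rewrite eqU.
case: m F subB capF forb eqU Us => [|m] F subB capF forb eqU Us.
  exfalso; move: capF; rewrite big_ord0 => /setP /(_ set0); by rewrite inE in_set0.
set U := UF F; set Y := blocks_union U; set X := \bigcap_(i < m.+1) blocks_union (F i).
have Fsub : forall i b, b \in F i -> b \in U by move=> i b bi; apply/bigcupP; exists i.
have key : forall x, (x \in Y : nat) + (x \in X : nat) <= \sum_(b in U) (x \in b : nat).
  move=> x.
  case xX : (x \in X).
    have := xX => /bigcapP /(_ ord0 isT) /bigcupP [b1 b1F xb1].
    case: (pickP (fun j => b1 \notin F j)) => [j Hj | H]; last first.
      have : b1 \in \bigcap_(i < m.+1) F i.
        by apply/bigcapP => j _; apply/negbFE/H.
      by rewrite capF in_set0.
    have := xX => /bigcapP /(_ j isT) /bigcupP [b2 b2F xb2].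
    have ne : b2 != b1 by apply/eqP => E; move: Hj; rewrite -E b2F.
    have xY : x \in Y by apply/bigcupP; exists b1 => //; exact: Fsub b1F.
    rewrite xY (bigD1 b1) /=; last exact: Fsub b1F.
    rewrite (bigD1 b2) /=; last by rewrite (Fsub _ _ b2F) ne.
    by rewrite xb1 xb2.
  rewrite addn0.
  case xY : (x \in Y) => //.
  move/bigcupP: xY => [b bU xb].
  by rewrite (bigD1 b) //= xb.
have sum1 : \sum_(b in U) #|b| = s * w.
  rewrite (eq_bigr (fun _ => w)); first by rewrite sum_nat_const Us.
  move=> b /bigcupP [i _ bi]; apply: cardB; exact: (subsetP (subB i)).
have sum2 : \sum_(b in U) #|b| = \sum_x \sum_(b in U) (x \in b : nat).
  under eq_bigr => b _ do rewrite card_as_sum.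
  exact: exchange_big.
have sum3 : #|Y| + #|X| <= \sum_x \sum_(b in U) (x \in b : nat).
  rewrite !card_as_sum -big_split /=; apply: leq_sum => x _; exact: key.
have hY : #|Y| + w <= s * w by rewrite -sum1 sum2; apply: leq_trans sum3; rewrite leq_add2l.
rewrite leq_min; apply/andP; split.
  rewrite mulnBl mul1n; lia.
by rewrite -cardT max_card.
Qed.
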